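(* Every deterministic mechanism for locating one facility on $[0,1]$ that is anonymous, Pareto efficient and strategy proof has approximation ratio at least $\frac{6}{5}$ for the complemented Gini index of utilities.
   Context: Agents $1,\dots,n$ report locations $x_1,\dots,x_n\in[0,1]$; a deterministic mechanism $f$ maps each profile (for each $n$) to a facility location $y=f(x_1,\dots,x_n)\in[0,1]$. Agent $i$'s distance is $d_i=|x_i-y|$, utility $u_i=1-d_i$. The Gini index of utilities is $G_u=\frac{\sum_i\sum_j|u_i-u_j|}{2n\sum_i u_i}$ and the complemented Gini index is $1-G_u$. $f$ is anonymous if permuting the reports does not change the output; Pareto efficient if for no profile is there a location $z$ with $|x_j-z|\le|x_j-f(x)|$ for all $j$ and strict inequality for some $i$; strategy proof if no agent $i$ can report some $x_i'$ and obtain $|x_i-f(x_1,\dots,x_i',\dots,x_n)|<|x_i-f(x)|$. The approximation ratio of $f$ is the supremum over all profiles $x$ of $\mathrm{OPT}(x)/(1-G_u(f(x)))$, where $\mathrm{OPT}(x)$ is the maximum of $1-G_u$ over all facility locations in $[0,1]$. *)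

(* Defs.v *)
From HB Require Import structures.
From mathcomp Require Import all_boot all_order all_algebra all_fingroup.
From mathcomp Require Import all_classical all_reals all_analysis.
Set Implicit Arguments. Unset Strict Implicit. Unset Printing Implicit Defensive.
Import Order.TTheory GRing.Theory Num.Theory.
Local Open Scope classical_set_scope.
Local Open Scope ring_scope.

Section Defs.
Variable R : realType.

Definition mechanism := forall n : nat, ('I_n -> R) -> R.

Definition in01 (a : R) : Prop := 0 <= a <= 1.
Definition profile01 n (x : 'I_n -> R) : Prop := forall i, in01 (x i).

Definition util n (x : 'I_n -> R) (y : R) (i : 'I_n) : R := 1 - `|x i - y|.

Definition gini n (x : 'I_n -> R) (y : R) : R :=
  (\sum_(i < n) \sum_(j < n) `|util x y i - util x y j|) /
  (2 * n%:R * \sum_(i < n) util x y i).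

Definition cgini n (x : 'I_n -> R) (y : R) : R := 1 - gini x y.

Definition OPT n (x : 'I_n -> R) : R := sup [set cgini x y | y in in01].

Definition mech_outputs01 (f : mechanism) : Prop :=
  forall n (x : 'I_n -> R), profile01 x -> in01 (f n x).

Definition anonymous (f : mechanism) : Prop :=
  forall n (x : 'I_n -> R) (s : 'S_n), profile01 x ->
    f n (fun i => x (s i)) = f n x.

Definition pareto_efficient (f : mechanism) : Prop :=
  forall n (x : 'I_n -> R), profile01 x ->
    ~ exists z : R, in01 z /\
        (forall j, `|x j - z| <= `|x j - f n x|) /\
        (exists i, `|x i - z| < `|x i - f n x|).

Definition strategy_proof (f : mechanism) : Prop :=
  forall n (x : 'I_n -> R) (i : 'I_n) (xi' : R), profile01 x -> in01 xi' ->
    ~ (`|x i - f n (fun j => if j == i then xi' else x j)| < `|x i - f n x|).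

(* approximation ratio: sup over all profiles (n >= 1) of OPT(x) / (1 - G_u(f(x))),
   taken in the extended reals so that an unbounded ratio is +oo *)
Definition approx_ratio (f : mechanism) : \bar R :=
  ereal_sup [set r : \bar R | exists (n : nat) (x : 'I_n -> R),
     [/\ (0 < n)%N, profile01 x & r = (OPT x / cgini x (f n x))%:E]].
End Defs.

(* Main.v *)
Require Import Defs.
From HB Require Import structures.
From mathcomp Require Import all_boot all_order all_algebra all_fingroup.
From mathcomp Require Import all_classical all_reals all_analysis.
From mathcomp Require Import ring lra.
Import Order.TTheory GRing.Theory Num.Theory.
Local Open Scope ring_scope.

Section Aux.
Variable R : realType.

Definition p2 (a b : R) : 'I_2 -> R := fun i => if i == ord0 then a else b.

Lemma cgini2 (a b y : R) :
  cgini (p2 a b) y =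
  1 - `|(1 - `|a - y|) - (1 - `|b - y|)| / (2 * ((1 - `|a - y|) + (1 - `|b - y|))).
Proof.
rewrite /cgini /gini /util /p2 !big_ord_recr !big_ord0 /= !add0r.
congr (1 - _).
set ua := 1 - `|a - y|; set ub := 1 - `|b - y|.
rewrite !subrr normr0 addr0 add0r distrC.
have -> : `|ub - ua| + `|ub - ua| = 2 * `|ub - ua| by rewrite mulr2n mulrDl mul1r.
by rewrite -[2 * 2 * _]mulrA -mulf_div divff ?mul1r // pnatr_eq0.
Qed.


Lemma in01_util (a y : R) : in01 a -> in01 y -> 0 <= 1 - `|a - y|.
Proof.
rewrite /in01 => /andP[a0 a1] /andP[y0 y1]; rewrite subr_ge0.
by rewrite ler_norml; apply/andP; split; lra.
Qed.

Lemma OPT_ge1 (a b : R) : in01 a -> in01 b -> 1 <= OPT (p2 a b).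
Proof.
move=> ha hb.
have hub : has_ubound [set cgini (p2 a b) y | y in (@in01 R)].
  exists 1 => _ [y hy <-]; rewrite cgini2 lerBlDr lerDl.
  by apply: divr_ge0 => //; apply: mulr_ge0 => //; apply: addr_ge0; apply: in01_util.
have hm : in01 ((a + b) / 2).
  by move: ha hb; rewrite /in01 => /andP[? ?] /andP[? ?]; apply/andP; split; lra.
have := ub_le_sup hub (ex_intro2 _ _ _ hm erefl).
suff -> : cgini (p2 a b) ((a + b) / 2) = 1 by [].
rewrite cgini2.
have -> : `|a - (a + b) / 2| = `|b - (a + b) / 2|.
  have -> : a - (a + b) / 2 = - (b - (a + b) / 2) by field.
  by rewrite normrN.
by rewrite subrr normr0 mul0r subr0.
Qed.

Lemma ratio_ge (O c : R) : 0 < c -> c <= 5 / 6 -> 1 <= O -> 6 / 5 <= O / c.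
Proof.
move=> c0 c56 O1; rewrite ler_pdivlMr //.
have : 6 / 5 * c <= 1 by rewrite -(@ler_pM2l _ (5/6)) ?mulrA; [| lra]; lra.
lra.
Qed.

End Aux.
Arguments p2 {R}.

Theorem theorem5 (R : realType) (f : mechanism R) :
  mech_outputs01 f -> anonymous f -> pareto_efficient f -> strategy_proof f ->
  ((6 / 5 : R)%:E <= approx_ratio f)%E.
Proof.
move=> hout _ _ hsp.
have h01 : profile01 (p2 0 1 : 'I_2 -> R).
  by move=> i; rewrite /p2 /in01; case: (i == ord0); apply/andP; split; lra.
have h0 : in01 (0:R) by rewrite /in01; apply/andP; split; lra.
have h1 : in01 (1:R) by rewrite /in01; apply/andP; split; lra.
set y0 := f 2%N (p2 0 1).
have hy0 : in01 y0 by apply: hout.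
have key : forall x : 'I_2 -> R, profile01 x -> 0 < cgini x (f 2%N x) ->
    cgini x (f 2%N x) <= 5 / 6 -> 1 <= OPT x -> ((6 / 5 : R)%:E <= approx_ratio f)%E.
  move=> x hx c0 c56 O1.
  apply: (@le_trans _ _ (OPT x / cgini x (f 2%N x))%:E).
    by rewrite lee_fin; apply: ratio_ge.
  by apply: ereal_sup_ubound; exists 2%N, x; split.
move: (hy0); rewrite /in01 => /andP[y00 y01].
case: (lerP y0 (1/2)) => hy.
- set x := p2 y0 1.
  have hx : profile01 x.
    by move=> i; rewrite /x /p2 /in01; case: (i == ord0); apply/andP; split; lra.
  have hfx : f 2%N x = y0.
    have := hsp 2%N x ord0 0 hx h0.
    have -> : (fun j : 'I_2 => if j == ord0 then 0 else x j) = p2 0 1.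
      by apply/funext => j; rewrite /x /p2; case: (j == ord0).
    rewrite -/y0 /x /p2 eqxx subrr normr0 => /negP; rewrite -leNgt normr_le0 subr_eq0.
    by move=> /eqP <-.
  apply: (key x hx); rewrite ?hfx /x ?cgini2 ?subrr ?normr0 ?subr0.
  + have e : `|1 - y0| = 1 - y0 by rewrite ger0_norm // subr_ge0.
    rewrite e (_ : 1 - (1 - (1 - y0)) = 1 - y0); last by ring.
    rewrite e (_ : 1 + (1 - (1 - y0)) = 1 + y0); last by ring.
    rewrite subr_gt0 ltr_pdivrMr; lra.
  + have e : `|1 - y0| = 1 - y0 by rewrite ger0_norm // subr_ge0.
    rewrite e (_ : 1 - (1 - (1 - y0)) = 1 - y0); last by ring.
    rewrite e (_ : 1 + (1 - (1 - y0)) = 1 + y0); last by ring.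
    rewrite lerBlDr -lerBlDl ler_pdivlMr; lra.
  + by apply: OPT_ge1 => //; rewrite /in01; apply/andP; split; lra.
- set x := p2 0 y0.
  have hx : profile01 x.
    by move=> i; rewrite /x /p2 /in01; case: (i == ord0); apply/andP; split; lra.
  have hfx : f 2%N x = y0.
    have := hsp 2%N x (@ord_max 1) 1 hx h1.
    have -> : (fun j : 'I_2 => if j == ord_max then 1 else x j) = p2 0 1.
      by apply/funext => j; rewrite /x /p2; case: j => [[|[|]]].
    rewrite -/y0 /x /p2 /= subrr normr0 => /negP; rewrite -leNgt normr_le0 subr_eq0.
    by move=> /eqP <-.
  apply: (key x hx); rewrite ?hfx /x ?cgini2 ?subrr ?normr0 ?subr0 ?sub0r ?normrN.
  + rewrite (@ger0_norm _ y0) // (_ : 1 - y0 - 1 = - y0); last by ring.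
    rewrite normrN ger0_norm //.
    rewrite subr_gt0 ltr_pdivrMr; lra.
  + rewrite (@ger0_norm _ y0) // (_ : 1 - y0 - 1 = - y0); last by ring.
    rewrite normrN ger0_norm //.
    rewrite lerBlDr -lerBlDl ler_pdivlMr; lra.
  + by apply: OPT_ge1 => //; rewrite /in01; apply/andP; split; lra.
Qed.
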